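(* There is an absolute constant $C>0$ such that the following holds. Let $(X,\mu)$ be a measure space and let $E_0 \subset E_1 \subset \dots \subset E_N$ be measurable subsets of $X$ with $N \ge 2$. If $1/N \le \varepsilon \le 1/2$, then there exist integers $0 \le n < m \le N$ with $m - n \ge \varepsilon N$ such that $\mu(E_m \setminus E_n) \le C\varepsilon\,\mu(E_N)$. *)

(* Defs.v *)
From HB Require Import structures.
From mathcomp Require Import all_boot all_order all_algebra.
From mathcomp Require Import all_classical all_reals all_analysis.

(* Main.v *)
Require Import Defs.
From HB Require Import structures.
From mathcomp Require Import all_boot all_order all_algebra.
From mathcomp Require Import all_classical all_reals all_analysis.
From mathcomp Require Import lra ring.
Import Order.TTheory GRing.Theory Num.Theory.
Local Open Scope classical_set_scope.
Local Open Scope ring_scope.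

Lemma argmin_nat (R : realType) (a : nat -> \bar R) (K : nat) :
  (0 < K)%N -> exists j, (j < K)%N /\ forall i, (i < K)%N -> (a j <= a i)%E.
Proof.
elim: K => // -[|K] IH _.
  by exists 0%N; split => // i; rewrite ltnS leqn0 => /eqP ->.
have [j [hj hm]] := IH isT.
have [le|lt] := leP (a j) (a K.+1).
  exists j; split; first by rewrite ltnW.
  move=> i; rewrite ltnS leq_eqVlt => /orP[/eqP ->|]; [exact: le| exact: hm].
exists K.+1; split => // i; rewrite ltnS leq_eqVlt => /orP[/eqP ->//|hi].
exact: le_trans (ltW lt) (hm i hi).
Qed.

Theorem lemma1p12 :
  exists C : rat, 0 < C /\
  forall (d : measure_display) (T : measurableType d) (R : realType)
    (mu : {measure set T -> \bar R}) (N : nat) (E : nat -> set T),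
    (forall i, (i <= N)%N -> measurable (E i)) ->
    (forall i, (i < N)%N -> E i `<=` E i.+1) ->
    (2 <= N)%N ->
    forall eps : R, (N%:R)^-1 <= eps -> eps <= 2^-1 ->
    exists n m : nat, [/\ (n < m)%N, (m <= N)%N,
      eps * N%:R <= (m - n)%:R &
      (mu (E m `\` E n) <= ((ratr C * eps)%:E * mu (E N)))%E].
Proof.
exists 4%:R; split => //.
move=> d T R mu N E mE incE N2 eps heps1 heps2.
have N0 : (0 < N)%N by apply: leq_trans N2.
have N0r : (0 : R) < N%:R by rewrite ltr0n.
set x := eps * N%:R.
have x1 : 1 <= x.
  have := ler_wpM2r (ltW N0r) heps1; rewrite mulVf //; exact: lt0r_neq0.
have xN : x <= N%:R / 2.
  by rewrite /x mulrC ler_wpM2l // ltW.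
have x0 : 0 <= x by apply: le_trans x1.
set L := (Num.Def.trunc x).+1.
have xL : x < L%:R by exact: truncnS_gt.
have Lx : L%:R <= x + 1.
  rewrite /L -addn1 natrD lerD2r.
  by case/andP: (truncn_itv x0).
have L0 : (0 < L)%N by [].
have LN : (L <= N)%N.
  rewrite -(ler_nat R); apply: (le_trans Lx).
  have : (2 : R) <= N%:R by rewrite (ler_nat R 2).
  lra.
set K := (N %/ L)%N.
have K0 : (0 < K)%N by rewrite divn_gt0.
have NK : (N < K.+1 * L)%N by exact: ltn_ceil.
have K0r : (0 : R) < K%:R by rewrite ltr0n.
have Kinv : K%:R^-1 <= 4%:R * eps.
  have h1 : N%:R < K.+1%:R * L%:R :> R by rewrite -natrM ltr_nat.
  have h2 : K.+1%:R <= 2 * K%:R :> R.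
    have : (1 : R) <= K%:R by rewrite (ler_nat R 1).
    rewrite -addn1 natrD; lra.
  have h3 : K.+1%:R * L%:R <= 2 * K%:R * (2 * x) :> R.
    apply: le_trans (ler_wpM2r _ h2) _; first by [].
    rewrite ler_wpM2l //; lra.
  have h4 : N%:R * 1 < N%:R * (4%:R * eps * K%:R) :> R.
    rewrite mulr1; apply: (lt_le_trans h1); apply: (le_trans h3).
    by rewrite /x le_eqVlt; apply/orP; left; apply/eqP; ring.
  rewrite ltr_pM2l // in h4.
  rewrite -(ler_pM2r K0r) mulVf ?ltW //; exact: lt0r_neq0.
have mono : forall i j, (i <= j)%N -> (j <= N)%N -> E i `<=` E j.
  move=> i; elim=> [|j IH] ij jN.
    by move: ij; rewrite leqn0 => /eqP ->.
  move: ij; rewrite leq_eqVlt => /orP[/eqP -> //|ij].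
  exact: subset_trans (IH ij (ltnW jN)) (incE j jN).
set a := fun i => mu (E (i.+1 * L)%N `\` E (i * L)%N).
have [j [jK hj]] := @argmin_nat R a K K0.
have KLN : (K * L <= N)%N := leq_divM N L.
have claim : forall k, (k <= K)%N -> (a j *+ k <= mu (E (k * L)%N))%E.
  elim=> [|k IH] hk; first exact: measure_ge0.
  have kL : (k.+1 * L <= N)%N by apply: leq_trans (leq_mul hk (leqnn L)) KLN.
  have kL' : (k * L <= N)%N by apply: leq_trans (leq_mul (leqnSn k) (leqnn L)) kL.
  have sub : E (k*L)%N `<=` E (k.+1*L)%N := mono _ _ (leq_mul (leqnSn k) (leqnn L)) kL.
  rewrite -(setDUK sub) measureU //; first last.
  - exact: setDIK.
  - by apply: measurableD; apply: mE.
  - exact: mE.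
  rewrite muleS addeC; apply: leeD; first exact: IH (ltnW hk).
  exact: hj.
exists (j*L)%N, (j.+1*L)%N; split.
- by rewrite ltn_pmul2r.
- exact: leq_trans (leq_mul jK (leqnn L)) KLN.
- by rewrite -mulnBl subSnn mul1n ltW.
have hM : (a j *+ K <= mu (E N))%E.
  apply: le_trans (claim K (leqnn K)) _.
  apply: le_measure; [exact: mem_set (mE _ KLN) | exact: mem_set (mE _ (leqnn N))|].
  exact: mono _ _ KLN (leqnn N).
rewrite -mule_natl in hM.
rewrite rmorph_nat.
change (a j <= (4%:R * eps)%:E * mu (E N))%E.
apply: (@le_trans _ _ ((K%:R^-1)%:E * mu (E N))%E).
  have -> : a j = ((K%:R^-1 * K%:R)%:E * a j)%E by rewrite mulVf ?mul1e //; exact: lt0r_neq0.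
  rewrite EFinM -muleA; apply: lee_wpmul2l => //.
apply: lee_wpmul2r; first exact: measure_ge0.
by rewrite lee_fin.
Qed.
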